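(* Let $S$ be a finitely generated completely simple semigroup with maximal subgroups isomorphic to a group $G$. Let $\tau : Y^+ \to S$ be a finite semigroup choice of generators for $S$ and $\sigma : X^* \to G$ a finite monoid choice of generators for $G$, and let $W = \{u \in X^* : u\sigma = 1\}$ be the word problem of $G$. Then there is a rational transduction $\rho \subseteq X^* \times \hat{Y}^*$ such that $L_\tau(S)$ is the Kleene closure $(W\rho)^*$.
   Context: Maps are written on the right. $X^*$, $X^+$: free monoid and free semigroup on $X$. A semigroup is completely simple if it has no proper ideals and has a primitive idempotent (idempotent $e$ such that every idempotent $f$ with $ef = fe = f$ equals $e$); maximal subgroups are subsemigroups that are groups under the inherited multiplication and contained in no larger such. For a monoid $M$ and surjective morphism $\sigma : Y^* \to M$, let $\overline{Y} = \{\overline{y} : y \in Y\}$ be new symbols, $\hat{Y} = Y \cup \overline{Y}$; the loop automaton has vertex set $M$, for each $a \in M$, $y \in Y$ an edge $a \to a(y\sigma)$ labelled $y$ and an edge $a(y\sigma) \to a$ labelled $\overline{y}$; the loop problem is the set of labels of paths from the identity to the identity. For a semigroup $S$ and surjective $\tau : Y^+ \to S$, $L_\tau(S)$ is the loop problem of $S^1$ ($S$ with a new identity adjoined even if one exists) with respect to the extension $\tau^1 : Y^* \to S^1$. A finite transducer from $X$ to $Z$ is a finite directed graph with edges labelled by elements of $X^* \times Z^*$, an initial vertex and terminal vertices; the relation it accepts is the set of labels (componentwise concatenations) of paths from initial to terminal vertices; such relations are rational transductions. For $\rho \subseteq X^* \times Z^*$ and $L \subseteq X^*$, $L\rho = \{v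 : (u,v) \in \rho \text{ for some } u \in L\}$. The Kleene closure $K^*$ of a language $K$ is the submonoid of the free monoid generated by $K$. *)

(* Defs.v *)
From mathcomp Require Import all_boot.
From Stdlib Require Lists.List.
Set Implicit Arguments. Unset Strict Implicit. Unset Printing Implicit Defensive.

Definition associative_op (S : Type) (mul : S -> S -> S) : Prop :=
  forall a b c, mul a (mul b c) = mul (mul a b) c.

Definition is_ideal (S : Type) (mul : S -> S -> S) (I : S -> Prop) : Prop :=
  (exists x, I x) /\ forall s x, I x -> I (mul s x) /\ I (mul x s).

Definition sg_simple (S : Type) (mul : S -> S -> S) : Prop :=
  forall I, is_ideal mul I -> forall x, I x.

Definition idempotent (S : Type) (mul : S -> S -> S) (e : S) : Prop := mul e e = e.

Definition primitive_idempotent (S : Type) (mul : S -> S -> S) (e : S) : Prop :=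
  idempotent mul e /\
  forall f, idempotent mul f -> mul e f = f -> mul f e = f -> f = e.

Definition completely_simple (S : Type) (mul : S -> S -> S) : Prop :=
  sg_simple mul /\ exists e, primitive_idempotent mul e.

Definition is_subgroup (S : Type) (mul : S -> S -> S) (H : S -> Prop) : Prop :=
  (forall a b, H a -> H b -> H (mul a b)) /\
  exists e, H e /\ (forall h, H h -> mul e h = h /\ mul h e = h) /\
    (forall h, H h -> exists h', H h' /\ mul h h' = e /\ mul h' h = e).

Definition maximal_subgroup (S : Type) (mul : S -> S -> S) (H : S -> Prop) : Prop :=
  is_subgroup mul H /\
  forall K, is_subgroup mul K -> (forall x, H x -> K x) -> forall x, K x -> H x.

Record is_group (G : Type) (mul : G -> G -> G) (one : G) (inv : G -> G) : Prop := {
  grp_assoc : associative_op mul;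
  grp_mul1 : forall g, mul one g = g;
  grp_mulg1 : forall g, mul g one = g;
  grp_mulV : forall g, mul (inv g) g = one;
  grp_mulgV : forall g, mul g (inv g) = one }.

Definition subgroup_iso (S G : Type) (mulS : S -> S -> S) (mulG : G -> G -> G)
    (H : S -> Prop) : Prop :=
  exists phi : G -> S,
    (forall g, H (phi g)) /\ (forall h, H h -> exists g, phi g = h) /\
    injective phi /\ (forall a b, phi (mulG a b) = mulS (phi a) (phi b)).

Definition meval (X M : Type) (mul : M -> M -> M) (one : M) (g : X -> M)
    (w : seq X) : M := foldl (fun a x => mul a (g x)) one w.

(* semigroup morphism Y^+ -> S on the nonempty word y :: w *)
Definition seval (Y S : Type) (mul : S -> S -> S) (g : Y -> S) (y : Y)
    (w : seq Y) : S := foldl (fun a x => mul a (g x)) (g y) w.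

(* hat Y = Y + Y : inl y is y, inr y is \overline{y} *)
Inductive lpath (M Y : Type) (mul : M -> M -> M) (g : Y -> M) :
    M -> seq (Y + Y) -> M -> Prop :=
| lp_nil a : lpath mul g a [::] a
| lp_fwd a y w b : lpath mul g (mul a (g y)) w b -> lpath mul g a (inl y :: w) b
| lp_bwd a y w b : lpath mul g a w b -> lpath mul g (mul a (g y)) (inr y :: w) b.

Definition loop_problem (M Y : Type) (mul : M -> M -> M) (one : M) (g : Y -> M)
    (w : seq (Y + Y)) : Prop := lpath mul g one w one.

(* S^1 : S with a new identity None adjoined *)
Definition mul1 (S : Type) (mul : S -> S -> S) (a b : option S) : option S :=
  match a, b with
  | None, _ => b
  | _, None => a
  | Some x, Some y => Some (mul x y)
  end.

Definition L_tau (S Y : Type) (mul : S -> S -> S) (gen : Y -> S) : seq (Y + Y) -> Prop :=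
  loop_problem (mul1 mul) None (fun y => Some (gen y)).

Record transducer (X Z : Type) := Transducer {
  tr_state : finType;
  tr_init : tr_state;
  tr_final : tr_state -> bool;
  tr_edges : seq (tr_state * seq X * seq Z * tr_state) }.

Arguments tr_state {X Z} t.
Inductive taccept (X Z : Type) (T : transducer X Z) :
    tr_state T -> seq X -> seq Z -> Prop :=
| ta_final q : @tr_final X Z T q -> @taccept X Z T q [::] [::]
| ta_edge q u v q' u' v' :
    Stdlib.Lists.List.In (q, u, v, q') (@tr_edges X Z T) -> @taccept X Z T q' u' v' ->
    @taccept X Z T q (u ++ u') (v ++ v').

Definition rational_transduction (X Z : Type) (rho : seq X -> seq Z -> Prop) : Prop :=
  exists T : transducer X Z, forall u v, rho u v <-> @taccept X Z T (@tr_init X Z T) u v.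

Definition image_lang (X Z : Type) (L : seq X -> Prop) (rho : seq X -> seq Z -> Prop)
    (v : seq Z) : Prop := exists u, L u /\ rho u v.

Definition kleene (Z : Type) (K : seq Z -> Prop) (w : seq Z) : Prop :=
  exists ws : seq (seq Z), (forall x, Stdlib.Lists.List.In x ws -> K x) /\ w = flatten ws.

(* Main.v *)
Require Import Defs.
From mathcomp Require Import all_boot.
From Stdlib Require Import ClassicalEpsilon.
Set Implicit Arguments. Unset Strict Implicit.

Definition dec (P : Prop) : bool := if excluded_middle_informative P then true else false.
Lemma decP (P : Prop) : dec P = true <-> P.
Proof. by rewrite /dec; case: excluded_middle_informative. Qed.

Lemma InP (T : eqType) (x : T) s : List.In x s <-> x \in s.
Proof.
elim: s => [|y s IH] //=; rewrite in_cons; split.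
- by case=> [->|/IH ->]; rewrite ?eqxx ?orbT.
- by case/orP=> [/eqP ->|/IH]; [left|right].
Qed.

Section SG.
Variables (S : Type) (mul : S -> S -> S).
Hypothesis assoc : associative_op mul.
Local Infix "·" := mul (at level 40, left associativity).

Lemma ctx2 a b c : a · b = c -> forall t, t · a · b = t · c.
Proof. by move=> H t; rewrite -assoc H. Qed.
Lemma ctx3 a b c d : a · b · c = d -> forall t, t · a · b · c = t · d.
Proof. by move=> H t; rewrite -!assoc [a · (b · c)]assoc H. Qed.
Lemma ctx4 a b c d f : a · b · c · d = f -> forall t, t · a · b · c · d = t · f.
Proof. by move=> H t; rewrite -!assoc [b · (c · d)]assoc [a · (b · c · d)]assoc [a · (b · c)]assoc H. Qed.

Ltac s2 H := rewrite ?(ctx2 H) ?H.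
Ltac s3 H := rewrite ?(ctx3 H) ?H.
Ltac s4 H := rewrite ?(ctx4 H) ?H.

Hypothesis simple : sg_simple mul.

Lemma ideal_gen a x : exists al be, x = al · a · be.
Proof.
apply: (simple (I := fun x => exists al be, x = al · a · be)).
split; first by exists (a · a · a), a, a.
move=> s _ [al [be ->]]; split.
- by exists (s · al), be; rewrite !assoc.
- by exists al, (be · s); rewrite !assoc.
Qed.

Variable e : S.
Hypothesis ee : e · e = e.
Hypothesis prim : forall f, f · f = f -> e · f = f -> f · e = f -> f = e.

Definition inH x := e · x = x /\ x · e = x.

Lemma H_inv h : inH h -> exists h', inH h' /\ h · h' = e /\ h' · h = e.
Proof.
move=> [eh he].
have [al [be E]] := ideal_gen h e.
set b := e · al · e; set c := e · be · e.
have Ebhc : b · h · c = e.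
  rewrite /b /c !assoc; s2 eh; s2 he; s3 (esym E); s2 ee; done.
have ce : c · e = c by rewrite /c; s2 ee.
have eb : e · b = b by rewrite /b !assoc; s2 ee.
have be' : b · e = b by rewrite /b; s2 ee.
have ec : e · c = c by rewrite /c !assoc; s2 ee.
clearbody b c.
exists (c · b); split; first by split; [rewrite assoc ec | rewrite -assoc be'].
split.
- apply: prim.
  + by rewrite !assoc; s3 Ebhc; s2 ce.
  + by rewrite !assoc eh.
  + by rewrite -!assoc be'.
- apply: prim.
  + by rewrite !assoc; s3 Ebhc; s2 ce.
  + by rewrite !assoc ec.
  + by rewrite -!assoc he.
Qed.

Lemma H_max : maximal_subgroup mul inH.
Proof.
split.
- split.
  + by move=> a b [ea ae] [eb be]; split; rewrite ?assoc ?ea // -assoc be.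
  + exists e; split; first by split.
    split; first by move=> h [eh he].
    move=> h Hh; have [h' [H1 [H2 H3]]] := H_inv Hh; by exists h'.
- move=> K [Kmul [e' [Ke' [Kid Kinv]]]] Hsub x Kx.
  have Ke : K e by apply: Hsub; split.
  have [i [Ki [ei ie]]] := Kinv e Ke.
  have e'e : e' · e = e by case: (Kid e Ke).
  have ee' : e' = e.
    have : e' · e = e' by rewrite -ie -assoc ee.
    by rewrite e'e => ->.
  by case: (Kid x Kx); rewrite ee'.
Qed.

Lemma xzx x z : inH z -> e · x · e · z = e -> z · (e · x · e) = e -> x · z · x = x.
Proof.
move=> [ez ze] H1 H2.
have [al [be E]] := ideal_gen e x.
have [A EA] : exists A, A = e · al · e by eexists.
have [B EB] : exists B, B = e · be · e by eexists.
have exe : e · x · e = A · B by rewrite E EA EB !assoc; s2 ee.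
rewrite exe in H1 H2.
have Ae : A · e = A by rewrite EA; s2 ee.
have eB : e · B = B by rewrite EB !assoc; s2 ee.
have eA : e · A = A by rewrite EA !assoc; s2 ee.
have Be : B · e = B by rewrite EB; s2 ee.
have Hu : B · z · A = e.
  apply: prim.
  - by rewrite !assoc; s3 H1; s2 ze.
  - by rewrite !assoc; s2 eB.
  - by rewrite -!assoc Ae.
transitivity (al · (B · z · A) · be); last by rewrite Hu.
rewrite E EA EB !assoc; s2 ez; s2 ze; done.
Qed.
Variables (G : Type) (mulG : G -> G -> G) (oneG : G) (invG : G -> G).
Hypothesis grpG : is_group mulG oneG invG.
Variable phi : G -> S.
Hypothesis phiM : forall a b, phi (mulG a b) = phi a · phi b.
Hypothesis phi_inj : injective phi.
Hypothesis phie : forall g, phi g · e = phi g.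
Hypothesis ephi : forall g, e · phi g = phi g.
Hypothesis phi1 : phi oneG = e.
Variable pinv : S -> G.
Hypothesis pinvK : forall h, inH h -> phi (pinv h) = h.
Variables (Y : finType) (gen : Y -> S) (r zy m : Y -> S).
Hypothesis rdef : forall y, r y = e · gen y.
Hypothesis rz : forall y, r y · zy y = e.
Hypothesis gzr : forall y, gen y · zy y · r y = gen y.
Hypothesis zye : forall y, zy y · e = zy y.
Hypothesis mer : forall y, m y · e · r y = gen y.
Hypothesis suff : forall x, exists y, x · zy y · r y = x.
Variables (X : finType) (genX : X -> G) (wordOf : G -> seq X).
Local Notation meval := (meval mulG oneG genX).
Hypothesis wordOfK : forall g, meval (wordOf g) = g.

Local Notation LP := (lpath (mul1 mul) (fun y => Some (gen y))).

Lemma er y : e · r y = r y.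
Proof. by rewrite rdef assoc ee. Qed.

Lemma phiVl g : phi (invG g) · phi g = e.
Proof. by rewrite -phiM (grp_mulV grpG) phi1. Qed.
Lemma phiVr g : phi g · phi (invG g) = e.
Proof. by rewrite -phiM (grp_mulgV grpG) phi1. Qed.

Lemma foldl_mev a u : foldl (fun a x => mulG a (genX x)) a u = mulG a (meval u).
Proof.
elim: u a => [|x u IH] a /=; first by rewrite /Defs.meval /= (grp_mulg1 grpG).
by rewrite /Defs.meval /= (grp_mul1 grpG) !IH (grp_assoc grpG).
Qed.

Lemma meval_cat u u' : meval (u ++ u') = mulG (meval u) (meval u').
Proof. by rewrite /Defs.meval foldl_cat foldl_mev. Qed.

Definition gP y y' := pinv (r y · gen y' · zy y').
Definition gQ s y y'' := mulG (pinv (r s · zy y)) (invG (gP y'' y)).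
Definition gF y1 yf := pinv (r y1 · zy yf).

Lemma PK y y' : phi (gP y y') = r y · gen y' · zy y'.
Proof. apply: pinvK; split; first by rewrite !assoc er. by rewrite -assoc zye. Qed.
Lemma FK y y' : phi (gF y y') = r y · zy y'.
Proof. apply: pinvK; split; first by rewrite !assoc er. by rewrite -assoc zye. Qed.
Lemma QK s y y'' : phi (gQ s y y'') = r s · zy y · phi (invG (gP y'' y)).
Proof. rewrite /gQ phiM pinvK //; split; first by rewrite !assoc er. by rewrite -assoc zye. Qed.

Local Notation St := (option (option (Y * Y))).
Definition guardB (s y : Y) := r s · zy y · r y = r s.
Definition guardF (y0 y1 yf : Y) := m y0 · e · gen y1 = gen y1 /\ r y1 · zy yf · r yf = r y1.

Definition edges : seq (St * seq X * seq (Y + Y) * St) :=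
  [seq (None, [::], [:: inl y0], Some (Some (y0, y0))) | y0 <- enum {: Y}]
  ++ [seq (Some (Some (p.1.1, p.1.2)), wordOf (gP p.1.2 p.2), [:: inl p.2],
           Some (Some (p.1.1, p.2))) | p <- enum {: Y * Y * Y}]
  ++ [seq (Some (Some (p.1.1.1, p.1.1.2)), wordOf (gQ p.1.1.2 p.1.2 p.2), [:: inr p.1.2],
           Some (Some (p.1.1.1, p.2))) | p <- enum {: Y * Y * Y * Y} & dec (guardB p.1.1.2 p.1.2)]
  ++ [seq (Some (Some (p.1.1, p.1.2)), wordOf (invG (gF p.2 p.1.2)), [:: inr p.2],
           (Some None : St)) | p <- enum {: Y * Y * Y} & dec (guardF p.1.1 p.2 p.1.2)].

Definition Tr : transducer X (Y + Y) :=
  @Transducer X (Y + Y) St None (fun q => q == Some None) edges.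

Local Notation TA := (@taccept X (Y + Y) Tr).

Definition SP (q : St) (u : seq X) (v : seq (Y + Y)) : Prop :=
  match q with
  | None => meval u = oneG -> LP None v None
  | Some None => u = [::] /\ v = [::]
  | Some (Some (y0, y)) => forall g, mulG g (meval u) = oneG ->
       LP (Some (m y0 · phi g · r y)) v None
  end.

Lemma sound q u v : TA q u v -> SP q u v.
Proof.
elim=> {q u v} [q fq | q u0 v0 q' u' v' Hin _ IH].
  by move: fq => /= /eqP ->.
move: IH; move/InP: Hin; rewrite !mem_cat; case/orP => [|/orP[|/orP[]]].
- case/mapP => y0 _ [-> -> -> ->] IH /= Hu.
  apply: lp_fwd => /=.
  have := IH oneG; rewrite phi1 (grp_mul1 grpG) mer; exact.
- case/mapP => [[[y0 y] y']] _ [-> -> -> ->] IH /= g Hg.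
  apply: lp_fwd => /=.
  have := IH (mulG g (gP y y')).
  rewrite phiM PK !assoc; s3 (gzr y'); apply.
  by rewrite -(grp_assoc grpG) -(wordOfK (gP y y')) -meval_cat.
- case/mapP => [[[[y0 s] y] y'']]; rewrite mem_filter => /andP[/decP Hgd _] [-> -> -> ->] IH /= g Hg.
  have H1 := IH (mulG g (gQ s y y'')).
  have -> : m y0 · phi g · r s = m y0 · phi (mulG g (gQ s y y'')) · r y'' · gen y.
    rewrite phiM QK !assoc.
    have rgen : forall t, t · r y'' · gen y = t · phi (gP y'' y) · r y.
      by move=> t; rewrite PK !assoc; s3 (gzr y).
    rewrite rgen; s2 (phiVl (gP y'' y)); s2 (zye y).
    by rewrite (ctx3 Hgd).
  apply: (lp_bwd (a := Some _)); apply: H1.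
  by rewrite -(grp_assoc grpG) -(wordOfK (gQ s y y'')) -meval_cat.
- case/mapP => [[[y0 yf] y1]]; rewrite mem_filter => /andP[/decP [Hg1 Hg2] _] [-> -> -> ->] IH /= g Hg.
  case: IH => ? ?; subst u' v'; rewrite cats0 in Hg.
  rewrite wordOfK in Hg.
  have Eg : g = gF y1 yf.
    have := congr1 (fun t => mulG t (gF y1 yf)) Hg.
    by rewrite -(grp_assoc grpG) (grp_mulV grpG) (grp_mulg1 grpG) (grp_mul1 grpG).
  rewrite Eg FK !assoc (ctx3 Hg2) rdef assoc Hg1.
  exact: (lp_bwd (a := None) _ (lp_nil _ _ _)).
Qed.

Lemma lp_cat a v b v' c : LP a v b -> LP b v' c -> LP a (v ++ v') c.
Proof.
elim=> {a v b} [a|a y w b _ IH|a y w b _ IH] H //=.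
- by apply: lp_fwd; apply: IH.
- by apply: lp_bwd; apply: IH.
Qed.

Local Notation Kl := (image_lang (fun u => meval u = oneG) (fun u v => TA None u v)).

Lemma kleene_cat v w : Kl v -> kleene Kl w -> kleene Kl (v ++ w).
Proof. by move=> Hv [ws [Hws ->]]; exists (v :: ws); split=> // x /= [<-|/Hws]. Qed.

Definition Inv y0 y x := m y0 · e · x = x /\ x · zy y · r y = x.

Lemma edgeP q u0 v0 q' u' v' : (q, u0, v0, q') \in edges -> TA q' u' v' -> TA q (u0 ++ u') (v0 ++ v').
Proof. by move=> H; apply: ta_edge; apply/InP. Qed.

Lemma complete a v b : LP a v b -> b = None ->
  (a = None -> kleene Kl v) /\
  (forall x y0 y g, a = Some x -> Inv y0 y x -> phi g = e · x · zy y ->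
     exists v1 v2 u, v = v1 ++ v2 /\ kleene Kl v2 /\ TA (Some (Some (y0, y))) u v1
        /\ mulG g (meval u) = oneG).
Proof.
elim=> {a v b} [a|a y w b _ IH|a y w b _ IH] Hb.
- split; first by move=> _; exists [::].
  by move=> x y0 y g; rewrite Hb.
- have [IH1 IH2] := IH Hb; split.
  + move=> Ha; subst a.
    have Iv : Inv y y (gen y).
      split; last exact: gzr.
      by have := mer y; rewrite rdef assoc; s2 ee.
    have Hv : phi oneG = e · gen y · zy y by rewrite phi1 -rdef rz.
    have [v1 [v2 [u [-> [Kv2 [Hu Hg]]]]]] := IH2 _ _ _ _ erefl Iv Hv.
    rewrite -cat_cons; apply: kleene_cat => //.
    exists u; split; first by rewrite (grp_mul1 grpG) in Hg.
    have -> : u = [::] ++ u by [].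
    have -> : inl y :: v1 = [:: inl y] ++ v1 by [].
    apply: edgeP Hu; rewrite !mem_cat; apply/orP; left.
    by apply/mapP; exists y; rewrite ?mem_enum.
  + move=> x y0 s g Ha [I1 I2] Hg; subst a.
    have Iv : Inv y0 y (x · gen y).
      split; first by rewrite assoc I1.
      by s3 (gzr y).
    have Hv : phi (mulG g (gP s y)) = e · (x · gen y) · zy y.
      by rewrite phiM PK Hg !assoc (ctx3 I2).
    have [v1 [v2 [u [-> [Kv2 [Hu Hgu]]]]]] := IH2 _ _ _ _ erefl Iv Hv.
    exists (inl y :: v1), v2, (wordOf (gP s y) ++ u); split; first by [].
    split; first by [].
    split.
    * have -> : inl y :: v1 = [:: inl y] ++ v1 by [].
      apply: edgeP Hu; rewrite !mem_cat; apply/orP; right; apply/orP; left.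
      by apply/mapP; exists (y0, s, y); rewrite ?mem_enum.
    * by rewrite meval_cat wordOfK (grp_assoc grpG).
- have [IH1 IH2] := IH Hb; split; first by case: a {IH IH2 IH1}.
  move=> x y0 s g Ha [I1 I2] Hg.
  case: a Ha IH1 IH2 {IH} => [x'|] /= [Ex] IH1 IH2.
  + subst x; rewrite !assoc in I2 Hg.
    have [y'' Hy''] := suff x'.
    have Ex' : x' = x' · gen y · zy y · phi (invG (gP y'' y)) · r y''.
      apply/esym; rewrite -{1}Hy'' (ctx3 (esym (PK y'' y))).
      by s2 (phiVr (gP y'' y)); s2 (zye y'').
    have I1' : m y0 · e · x' = x'.
      rewrite assoc in I1; rewrite {1}Ex' !assoc I1.
      by rewrite {2}Ex'.
    have Hrs : phi (invG g) · e · x' · gen y = r s.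
      have := congr1 (mul (phi (invG g) · e)) I2; rewrite !assoc => <-.
      by rewrite (ctx4 (esym Hg)) phiVl er.
    have guard : guardB s y.
      by rewrite /guardB -Hrs (ctx3 (gzr y)).
    have Hv : phi (mulG g (gQ s y y'')) = e · x' · zy y''.
      rewrite phiM QK Hg !assoc (ctx4 I2) !assoc {2}Ex' !assoc.
      by rewrite (ctx2 (rz y'')) (ctx2 (phie _)).
    have [v1 [v2 [u [-> [Kv2 [Hu Hgu]]]]]] := IH2 _ y0 y'' _ erefl (conj I1' Hy'') Hv.
    exists (inr y :: v1), v2, (wordOf (gQ s y y'') ++ u); split; first by [].
    split; first by [].
    split.
    * have -> : inr y :: v1 = [:: inr y] ++ v1 by [].
      apply: edgeP Hu; rewrite !mem_cat; apply/orP; right; apply/orP; right; apply/orP; left.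
      apply/mapP; exists (y0, s, y, y'') => //.
      by rewrite mem_filter mem_enum andbT; apply/decP.
    * by rewrite meval_cat wordOfK (grp_assoc grpG).
  + subst x.
    have Kw := IH1 erefl.
    exists [:: inr y], w, (wordOf (invG (gF y s))); split; first by [].
    split; first exact: Kw.
    split.
    * rewrite -[wordOf _]cats0 -[[:: inr y]]cats0.
      apply: (@edgeP _ _ _ (Some None) [::] [::]); last exact: (@ta_final X (Y + Y) Tr (Some None) erefl).
      rewrite !mem_cat; apply/orP; right; apply/orP; right; apply/orP; right.
      apply/mapP; exists (y0, s, y) => //.
      rewrite mem_filter mem_enum andbT; apply/decP; split=> //.
      by have := congr1 (mul e) I2; rewrite !assoc -rdef.
    * have -> : g = gF y s by apply: phi_inj; rewrite FK Hg rdef.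
      by rewrite wordOfK (grp_mulgV grpG).
Qed.

Lemma main_sec : exists rho : seq X -> seq (Y + Y) -> Prop,
  rational_transduction rho /\
  forall w, LP None w None <-> kleene (image_lang (fun u => meval u = oneG) rho) w.
Proof.
exists (fun u v => TA None u v); split; first by exists Tr.
move=> w; split.
- by move=> H; exact: ((complete H erefl).1 erefl).
- move=> [ws [Hws ->]]; elim: ws Hws => [|x ws IH] Hws /=; first exact: lp_nil.
  apply: lp_cat; last by apply: IH => y Hy; apply: Hws; right.
  have [u [Hu Hux]] := Hws x (or_introl erefl).
  exact: (sound Hux Hu).
Qed.

End SG.

Theorem theorem5p5
  (S : Type) (mulS : S -> S -> S) (assocS : associative_op mulS)
  (csS : completely_simple mulS)
  (G : Type) (mulG : G -> G -> G) (oneG : G) (invG : G -> G)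
  (grpG : is_group mulG oneG invG)
  (maxsub_iso : forall H, maximal_subgroup mulS H -> subgroup_iso mulS mulG H)
  (Y : finType) (genY : Y -> S)
  (tau_surj : forall s, exists (y : Y) (w : seq Y), seval mulS genY y w = s)
  (X : finType) (genX : X -> G)
  (sigma_surj : forall g, exists w : seq X, meval mulG oneG genX w = g) :
  let W := fun u : seq X => meval mulG oneG genX u = oneG in
  exists rho : seq X -> seq (Y + Y) -> Prop,
    rational_transduction rho /\
    forall w, L_tau mulS genY w <-> kleene (image_lang W rho) w.
Proof.
move=> W.
case: csS => simple [e [ee prim]].
have Hmax := H_max assocS simple ee prim.
have [phi [phiH [phisurj [phiinj phiM]]]] := maxsub_iso _ Hmax.
have ephi g : mulS e (phi g) = phi g by case: (phiH g).
have phie g : mulS (phi g) e = phi g by case: (phiH g).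
have [pinv pinvK] : exists pinv : S -> G, forall h, inH mulS e h -> phi (pinv h) = h.
  apply: (choice (fun h g => inH mulS e h -> phi g = h)) => h.
  case: (classic (inH mulS e h)) => [/phisurj [g <-]|nh]; first by exists g.
  by exists oneG.
have [wordOf wordOfK] : exists wordOf : G -> seq X, forall g, meval mulG oneG genX (wordOf g) = g.
  exact: (choice _ sigma_surj).
have phi1 : phi oneG = e.
  have [g0 Hg0] : exists g0, phi g0 = e by apply: phisurj; split.
  have := phiM oneG g0; rewrite (grp_mul1 grpG) Hg0 phie; by move=> <-.
pose z x := phi (invG (pinv (mulS (mulS e x) e))).
have exeH x : inH mulS e (mulS (mulS e x) e).
  by split; [rewrite !assocS ee | rewrite -!assocS ee].
have zl x : mulS (z x) (mulS (mulS e x) e) = e.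
  by rewrite /z -{2}(pinvK _ (exeH x)) -phiM (grp_mulV grpG).
have zr x : mulS (mulS (mulS e x) e) (z x) = e.
  by rewrite /z -{1}(pinvK _ (exeH x)) -phiM (grp_mulgV grpG).
have xz x : mulS (mulS x (z x)) x = x.
  exact: (xzx assocS simple ee prim (phiH _) (zr x) (zl x)).
pose r y := mulS e (genY y).
pose zy y := z (genY y).
pose m y := mulS (mulS (genY y) e) (zy y).
have rz y : mulS (r y) (zy y) = e.
  by rewrite /r /zy /z -ephi assocS; apply: zr.
have gzr y : mulS (mulS (genY y) (zy y)) (r y) = genY y.
  by rewrite /r assocS /zy /z (ctx2 assocS (phie _)); exact: xz.
have zye y : mulS (zy y) e = zy y by apply: phie.
have mer y : mulS (mulS (m y) e) (r y) = genY y.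
  rewrite /m /r !assocS (ctx2 assocS ee) /zy (ctx2 assocS (phie _)).
  by rewrite -[mulS (mulS (genY y) e) (z (genY y))]assocS ephi xz.
have hsuf x : exists y, mulS (mulS x (zy y)) (r y) = x.
  have [y [w <-]] := tau_surj x.
  case/lastP: w => [|w y']; first by exists y; apply: gzr.
  exists y'; rewrite /seval foldl_rcons.
  exact: (ctx3 assocS (gzr y')).
have := @main_sec S mulS assocS e ee G mulG oneG invG grpG phi phiM phiinj phie phi1
  pinv pinvK Y genY r zy m (fun _ => erefl) rz gzr zye mer hsuf X genX wordOf wordOfK.
by [].
Qed.
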